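(* Let $\hat\Omega\subset\mathbb{R}^{N_D}$ be a reference element, let $P$ be a finite-dimensional space of real polynomials on $\hat\Omega$, and let $V$ be a finite-dimensional space of polynomial vector fields $\hat\Omega\to\mathbb{R}^{N_D}$ with $P^{N_D}\subseteq V$. Let $\{\hat x_\rho\}$ be solution points unisolvent for $P$ with Lagrange basis $\{l_\rho\}\subset P$, $l_\rho(\hat x_\sigma)=\delta_{\rho\sigma}$. Let $\{(\hat x_\nu,\hat n_\nu)\}$ be flux points with associated unit directions, split into external points $\nu\in E$ (on $\partial\hat\Omega$, with $\hat n_\nu$ the outward unit normal) and internal points $\nu\in I$, such that there is a basis $\{\boldsymbol\phi_\nu\}$ of $V$ with $\boldsymbol\phi_\rho(\hat x_\sigma)\cdot\hat n_\sigma=\delta_{\rho\sigma}$. Let $\{\mathbf g_\nu\}_{\nu\in E}$ be vector correction functions satisfying $\hat\nabla\cdot\mathbf g_\nu(\hat x_\sigma)=\hat\nabla\cdot\boldsymbol\phi_\nu(\hat x_\sigma)$ for every solution point $\hat x_\sigma$ and every $\nu\in E$. Let $u\in P$, let $\mathbf c\in\mathbb{R}^{N_D}$ be a constant vector, let $\mathbf f=\mathbf c\,u$ (a linear flux with constant coefficients), and let $\{F_\nu\}_{\nu\in E}$ be arbitrary real numbers (common normal fluxes). Define, at each solution point $\hat x_\sigma$, $$R^{\mathrm{SDRT}}_\sigma=\sum_{\nu\in I}\big(\mathbf f(\hat x_\nu)\cdot\hat n_\nu\big)\,\hat\nabla\cdot\boldsymbol\phi_\nu(\hat x_\sigma)+\sum_{\nu\in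 E}F_\nu\,\hat\nabla\cdot\boldsymbol\phi_\nu(\hat x_\sigma),$$ $$R^{\mathrm{FR}}_\sigma=\sum_\rho \mathbf f(\hat x_\rho)\cdot\hat\nabla l_\rho(\hat x_\sigma)+\sum_{\nu\in E}\Big(F_\nu-\Big[\sum_\rho \mathbf f(\hat x_\rho)\,l_\rho(\hat x_\nu)\Big]\cdot\hat n_\nu\Big)\hat\nabla\cdot\mathbf g_\nu(\hat x_\sigma).$$ Then $R^{\mathrm{SDRT}}_\sigma=R^{\mathrm{FR}}_\sigma$ for every solution point $\hat x_\sigma$. *)

(* Defs.v *)
From HB Require Import structures.
From mathcomp Require Import all_boot all_order all_algebra.
From mathcomp Require Export mpoly.
Set Implicit Arguments. Unset Strict Implicit. Unset Printing Implicit Defensive.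
Import Order.TTheory GRing.Theory Num.Theory.
Local Open Scope ring_scope.

Definition vfield (R : ringType) (n : nat) := {ffun 'I_n -> {mpoly R[n]}}.

Definition is_subspace (R : ringType) (M : lmodType R) (S : {pred M}) : Prop :=
  0 \in S /\ forall (a : R) (x y : M), x \in S -> y \in S -> a *: x + y \in S.

Definition findim (R : ringType) (M : lmodType R) (S : {pred M}) : Prop :=
  exists (k : nat) (b : 'I_k -> M),
    forall x, x \in S <-> exists c : 'I_k -> R, x = \sum_(i < k) c i *: b i.

Definition is_basis (R : ringType) (M : lmodType R) (S : {pred M}) (k : nat)
    (b : 'I_k -> M) : Prop :=
  [/\ forall i, b i \in S,
      forall x, x \in S -> exists c : 'I_k -> R, x = \sum_(i < k) c i *: b i
    & forall c : 'I_k -> R, \sum_(i < k) c i *: b i = 0 -> forall i, c i = 0].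

Definition unisolvent (R : ringType) (n N : nat) (P : {pred {mpoly R[n]}})
    (xs : 'I_N -> 'I_n -> R) : Prop :=
  forall d : 'I_N -> R, exists! p : {mpoly R[n]},
    p \in P /\ forall s, p.@[xs s] = d s.

Definition vdot (R : ringType) (n : nat) (a b : 'I_n -> R) : R :=
  \sum_(i < n) a i * b i.

Definition veval (R : comRingType) (n : nat) (phi : vfield R n) (x : 'I_n -> R)
  : 'I_n -> R := fun i => (phi i).@[x].

Definition vdiv (R : ringType) (n : nat) (phi : vfield R n) : {mpoly R[n]} :=
  \sum_(i < n) mderiv i (phi i).

Definition pgrad (R : comRingType) (n : nat) (p : {mpoly R[n]}) (x : 'I_n -> R)
  : 'I_n -> R := fun i => (mderiv i p).@[x].

Definition linflux (R : comRingType) (n : nat) (c : 'I_n -> R) (u : {mpoly R[n]})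
    (x : 'I_n -> R) : 'I_n -> R := fun i => c i * u.@[x].

(* Main.v *)
Require Import Defs.
From HB Require Import structures.
From mathcomp Require Import all_boot all_order all_algebra.
From mathcomp Require Import mpoly.
Import Order.TTheory GRing.Theory Num.Theory.
Local Open Scope ring_scope.

Lemma sub_sum (R : ringType) (M : lmodType R) (S : {pred M}) (N : nat)
  (a : 'I_N -> R) (p : 'I_N -> M) :
  is_subspace S -> (forall r, p r \in S) -> \sum_(r < N) a r *: p r \in S.
Proof.
move=> [S0 SD] Hp; elim/big_rec: _ => // r x _ Hx.
exact: SD.
Qed.

Theorem mainTheorem1 (R : realFieldType) (n Ns Nf : nat)
    (P : {pred {mpoly R[n]}}) (V : {pred vfield R n})
    (xs : 'I_Ns -> 'I_n -> R) (l : 'I_Ns -> {mpoly R[n]})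
    (xf : 'I_Nf -> 'I_n -> R) (nf : 'I_Nf -> 'I_n -> R) (E : {set 'I_Nf})
    (phi g : 'I_Nf -> vfield R n)
    (u : {mpoly R[n]}) (c : 'I_n -> R) (F : 'I_Nf -> R) :
  is_subspace P -> findim P ->
  is_subspace V -> findim V ->
  (forall q : vfield R n, (forall i, q i \in P) -> q \in V) ->
  unisolvent P xs ->
  (forall r, l r \in P) ->
  (forall r s, (l r).@[xs s] = (r == s)%:R) ->
  (forall v, vdot (nf v) (nf v) = 1) ->
  is_basis V phi ->
  (forall r s, vdot (veval (phi r) (xf s)) (nf s) = (r == s)%:R) ->
  (forall v s, v \in E -> (vdiv (g v)).@[xs s] = (vdiv (phi v)).@[xs s]) ->
  u \in P ->
  forall s : 'I_Ns,
    \sum_(v | v \notin E) vdot (linflux c u (xf v)) (nf v) * (vdiv (phi v)).@[xs s]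
      + \sum_(v in E) F v * (vdiv (phi v)).@[xs s]
    = \sum_(r < Ns) vdot (linflux c u (xs r)) (pgrad (l r) (xs s))
      + \sum_(v in E)
          (F v - vdot (fun i => \sum_(r < Ns) linflux c u (xs r) i * (l r).@[xf v]) (nf v))
          * (vdiv (g v)).@[xs s].
Proof.
move=> HP _ HV _ PV Huni lP ld _ [_ Hdec _] Hkr Hg uP s.
have Hu : u = \sum_(r < Ns) u.@[xs r] *: l r.
  have [p [[pP pe] pu]] := Huni (fun r => u.@[xs r]).
  have -> : u = p by symmetry; apply: pu; split.
  apply: pu; split; first exact: sub_sum.
  move=> t; rewrite raddf_sum /=.
  under eq_bigr do rewrite mevalZ ld.
  rewrite (bigD1 t) //= eqxx mulr1 big1 ?addr0 // => r /negbTE ->.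
  by rewrite mulr0.
set q : vfield R n := [ffun i => c i *: u].
have qV : q \in V.
  apply: PV => i; rewrite ffunE.
  by case: HP => P0 PD; rewrite -[_ *: u]addr0; apply: PD.
have [a Ha] := Hdec q qV.
have Ha2 : forall v, a v = vdot (linflux c u (xf v)) (nf v).
  move=> v.
  have : vdot (veval q (xf v)) (nf v) = vdot (linflux c u (xf v)) (nf v).
    by apply: eq_bigr => i _; rewrite /veval /linflux ffunE mevalZ.
  rewrite Ha => <-.
  rewrite /vdot /veval.
  under eq_bigr do rewrite sum_ffunE raddf_sum mulr_suml.
  rewrite exchange_big /=.
  under eq_bigr => r _.
    under eq_bigr do rewrite ffunE mevalZ -mulrA.
    rewrite -mulr_sumr.
    over.
  rewrite /=.
  under eq_bigr => r _ do rewrite [X in _ * X](Hkr r v).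
  rewrite (bigD1 v) //= eqxx mulr1 big1 ?addr0 // => r /negbTE ->.
  by rewrite mulr0.
have Hdq : (vdiv q).@[xs s] = \sum_(v < Nf) a v * (vdiv (phi v)).@[xs s].
  have -> : vdiv q = \sum_(v < Nf) a v *: vdiv (phi v).
    rewrite Ha /vdiv.
    under eq_bigr do rewrite sum_ffunE raddf_sum.
    rewrite exchange_big; apply: eq_bigr => v _.
    rewrite scaler_sumr; apply: eq_bigr => i _.
    by rewrite ffunE; exact: mderivZ.
  rewrite raddf_sum; apply: eq_bigr => v _; exact: mevalZ.
have Hdq2 : (vdiv q).@[xs s] = \sum_(r < Ns) vdot (linflux c u (xs r)) (pgrad (l r) (xs s)).
  rewrite /vdiv raddf_sum /= /vdot exchange_big /=; apply: eq_bigr => i _.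
  rewrite ffunE mderivZ mevalZ {1}Hu (raddf_sum (mderiv i)) raddf_sum mulr_sumr.
  apply: eq_bigr => r _; rewrite /linflux /pgrad.
  by rewrite -mulrA -[in RHS]mevalZ -mderivZ.
have Hbr : forall v, vdot (fun i => \sum_(r < Ns) linflux c u (xs r) i * (l r).@[xf v]) (nf v)
   = a v.
  move=> v; rewrite Ha2; apply: eq_bigr => i _; congr (_ * _).
  rewrite /linflux {2}Hu raddf_sum mulr_sumr; apply: eq_bigr => r _.
  by rewrite -mulrA -mevalZ.
rewrite -Hdq2 Hdq [in RHS](bigID (fun v => v \in E)) /=.
under [X in _ = _ + X]eq_bigr => v vE do rewrite Hbr Hg // mulrBl.
rewrite sumrB.
under [X in X + _ = _]eq_bigr => v _ do rewrite -Ha2.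
rewrite [X in _ = X + _]addrC -addrA; congr (_ + _).
by rewrite [RHS]addrC subrK.
Qed.
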